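(* Let $U$ be a finite set, $(T,I,N)$ an IMTL triplet, $\widetilde{R}$ a $T$-preorder relation on $U$, $A\subseteq U$ a crisp set with $A\neq\emptyset$ and $coA=U\setminus A\neq\emptyset$ (identified with the fuzzy set $A(u)=1$ for $u\in A$, $A(u)=0$ otherwise), and $L:\mathbb{R}\times\mathbb{R}\to\mathbb{R}^+$ a loss function of $\lor$-type. Let $\hat{A}:U\to[0,1]$ be an optimal solution of $$\text{minimize }\sum_{u\in U}L(A(u),\hat{A}(u))\quad\text{subject to } T(\widetilde{R}(u,v),\hat{A}(v))\le\hat{A}(u)\ (u,v\in U),\quad 0\le\hat{A}(u)\le1\ (u\in U).$$ Then: for every $u\in A$ there is $v\in coA$ such that $\widetilde{R}^-_{N(\hat{A}(v))}(v)$ is adjacent to $\widetilde{R}^+_{\hat{A}(u)}(u)$; and for every $u\in coA$ there is $v\in A$ such that $\widetilde{R}^+_{\hat{A}(v)}(v)$ is adjacent to $\widetilde{R}^-_{N(\hat{A}(u))}(u)$.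
   Context: A residual triplet $(T,I,N)$ consists of a left-continuous $t$-norm $T$, its residual implicator $I(x,y)=\sup\{\beta\in[0,1]: T(x,\beta)\le y\}$ and $N(x)=I(x,0)$; it is IMTL if $N$ is involutive. $\widetilde{R}:U\times U\to[0,1]$ is a $T$-preorder if reflexive and $T$-transitive. Granules: $\widetilde{R}^+_\lambda(u)$ is the fuzzy set $w\mapsto T(\widetilde{R}(w,u),\lambda)$ and $\widetilde{R}^-_\lambda(v)$ is $w\mapsto T(\widetilde{R}(v,w),\lambda)$. Adjacency: for $x,y\in U$, $\widetilde{R}^-_{\lambda_2}(y)$ is adjacent to $\widetilde{R}^+_{\lambda_1}(x)$ if $\lambda_1=I(\lambda_2,N(\widetilde{R}(y,x)))$; $\widetilde{R}^+_{\lambda_1}(x)$ is adjacent to $\widetilde{R}^-_{\lambda_2}(y)$ if $\lambda_2=I(\lambda_1,N(\widetilde{R}(y,x)))$. A loss function $L$ is of $\lor$-type if for every real $a$: $L(a,a)=0$; $x\mapsto L(x,a)$ and $x\mapsto L(a,x)$ are increasing for $x>a$ and decreasing for $x<a$. *)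

(* Defs.v *)
From HB Require Import structures.
From mathcomp Require Import all_boot all_order all_algebra.
From mathcomp Require Import boolp classical_sets reals.
Set Implicit Arguments. Unset Strict Implicit. Unset Printing Implicit Defensive.
Import Order.TTheory GRing.Theory Num.Theory.
Local Open Scope classical_set_scope.
Local Open Scope ring_scope.

Section Defs.
Variable R : realType.

Definition in01 (x : R) := 0 <= x <= 1.

Definition tnorm (T : R -> R -> R) : Prop :=
  [/\ (forall x y, in01 x -> in01 y -> in01 (T x y)),
      (forall x y, in01 x -> in01 y -> T x y = T y x),
      (forall x y z, in01 x -> in01 y -> in01 z -> T x (T y z) = T (T x y) z),
      (forall x y z, in01 x -> in01 y -> in01 z -> y <= z -> T x y <= T x z)
    & (forall x, in01 x -> T x 1 = x)].

(* left-continuity (in the second argument; equivalent to both by commutativity) *)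
Definition left_continuous (T : R -> R -> R) : Prop :=
  forall x y, in01 x -> in01 y -> 0 < y ->
    forall eps, 0 < eps -> exists2 delta, 0 < delta &
      forall z, in01 z -> y - delta < z -> z <= y -> `|T x z - T x y| < eps.

Definition ltnorm (T : R -> R -> R) : Prop := tnorm T /\ left_continuous T.

Definition resI (T : R -> R -> R) (x y : R) : R :=
  sup [set b : R | in01 b /\ T x b <= y].

Definition resN (T : R -> R -> R) (x : R) : R := resI T x 0.

(* the residual triplet (T,I,N) is IMTL: T left-continuous t-norm, N involutive *)
Definition IMTL (T : R -> R -> R) : Prop :=
  ltnorm T /\ forall x, in01 x -> resN T (resN T x) = x.

Definition T_preorder (U : finType) (T : R -> R -> R) (Rt : U -> U -> R) : Prop :=
  [/\ (forall u v, in01 (Rt u v)),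
      (forall u, Rt u u = 1)
    & (forall u v w, T (Rt u v) (Rt v w) <= Rt u w)].

Definition gran_plus (U : finType) (T : R -> R -> R) (Rt : U -> U -> R)
  (lam : R) (u : U) : U -> R := fun w => T (Rt w u) lam.
Definition gran_minus (U : finType) (T : R -> R -> R) (Rt : U -> U -> R)
  (lam : R) (v : U) : U -> R := fun w => T (Rt v w) lam.

(* adjacency, expressed on the parameters of the granules:
   minus_adj_plus T Rt y l2 x l1 : R^-_{l2}(y) is adjacent to R^+_{l1}(x)
   plus_adj_minus T Rt x l1 y l2 : R^+_{l1}(x) is adjacent to R^-_{l2}(y) *)
Definition minus_adj_plus (U : finType) (T : R -> R -> R) (Rt : U -> U -> R)
  (y : U) (l2 : R) (x : U) (l1 : R) : Prop :=
  l1 = resI T l2 (resN T (Rt y x)).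
Definition plus_adj_minus (U : finType) (T : R -> R -> R) (Rt : U -> U -> R)
  (x : U) (l1 : R) (y : U) (l2 : R) : Prop :=
  l2 = resI T l1 (resN T (Rt y x)).

(* loss function L : R x R -> R^+ of \/-type ("increasing" read strictly) *)
Definition vee_loss (L : R -> R -> R) : Prop :=
  [/\ (forall x y, 0 <= L x y),
      (forall a, L a a = 0),
      (forall a x y, a < x -> x < y -> L x a < L y a /\ L a x < L a y)
    & (forall a x y, x < y -> y < a -> L y a < L x a /\ L a y < L a x)].

Definition crisp (U : finType) (A : {set U}) (u : U) : R :=
  if u \in A then 1 else 0.

Definition feasible (U : finType) (T : R -> R -> R) (Rt : U -> U -> R) (B : U -> R) : Prop :=
  (forall u v, T (Rt u v) (B v) <= B u) /\ (forall u, in01 (B u)).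

Definition optimal (U : finType) (T : R -> R -> R) (Rt : U -> U -> R)
  (L : R -> R -> R) (A : {set U}) (Ah : U -> R) : Prop :=
  feasible T Rt Ah /\
  forall B, feasible T Rt B ->
    \sum_(u : U) L (crisp A u) (Ah u) <= \sum_(u : U) L (crisp A u) (B u).

End Defs.

(* Main.v *)
Require Import Defs.
From HB Require Import structures.
From mathcomp Require Import all_boot all_order all_algebra.
From mathcomp Require Import boolp classical_sets reals.
Import Order.TTheory GRing.Theory Num.Theory.
Local Open Scope ring_scope.
Local Open Scope classical_set_scope.
Set Implicit Arguments. Unset Strict Implicit.

Lemma T0r (R : realType) (T : R -> R -> R) x : tnorm T -> in01 x -> T x 0 = 0.
Proof.
case=> T01 TC TA TM T1 hx.
have h0 : in01 (0:R) by rewrite /in01 lexx ler01//.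
have h1 : in01 (1:R) by rewrite /in01 ler01 lexx.
apply/le_anti/andP; split; last by case/andP: (T01 _ _ hx h0).
rewrite TC // -[X in _ <= X](T1 0 h0); apply: TM => //; by case/andP: hx.
Qed.

Lemma resP (R : realType) (T : R -> R -> R) a b c : ltnorm T ->
  in01 a -> in01 b -> in01 c -> (c <= resI T a b) <-> (T a c <= b).
Proof.
move=> [tn lc] ha hb hc.
have T0 := @T0r R T a tn ha.
case: tn => T01 TC TA TM T1.
set S := [set x : R | in01 x /\ T a x <= b].
have hS : has_sup S.
  split; first by exists 0; split; [rewrite /in01 lexx ler01//|rewrite T0; case/andP: hb].
  by exists 1 => x [/andP[_ ?] _].
have ub : forall x, S x -> x <= sup S by move=> x Sx; exact: sup_upper_bound.
have s0 : 0 <= sup S.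
  apply: ub; split; [rewrite /in01 lexx ler01//|rewrite T0; by case/andP: hb].
have s1 : sup S <= 1 by apply: ge_sup; [case: hS|move=> x [/andP[_ ?] _]].
have hs : in01 (sup S) by rewrite /in01 s0 s1.
split => H; last exact: (ub c (conj hc H)).
apply: le_trans (TM _ _ _ ha hc hs H) _.
rewrite leNgt; apply/negP => Hlt.
have sp : 0 < sup S.
  rewrite lt_def s0 andbT; apply/negP => /eqP e.
  by move: Hlt; rewrite e T0 ltNge; case/andP: hb => -> .
have ep : 0 < T a (sup S) - b by rewrite subr_gt0.
have [d d0 Hd] := lc a (sup S) ha hs sp _ ep.
have [z [hz Tz] zd] := sup_adherent d0 hS.
have := Hd z hz zd (ub z (conj hz Tz)).
rewrite ltr_norml => /andP[+ _].
rewrite opprB ltrD2r.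
by rewrite ltNge Tz.
Qed.

Lemma resPb (R : realType) (T : R -> R -> R) a b c : ltnorm T ->
  in01 a -> in01 b -> in01 c -> (c <= resI T a b) = (T a c <= b).
Proof. by move=> lt ha hb hc; apply/idP/idP => /(resP lt ha hb hc). Qed.
Lemma in01_0 (R : realType) : in01 (0:R).
Proof. by rewrite /in01 lexx ler01. Qed.
Lemma in01_1 (R : realType) : in01 (1:R).
Proof. by rewrite /in01 lexx ler01. Qed.

Lemma resI01 (R : realType) (T : R -> R -> R) a b : ltnorm T ->
  in01 a -> in01 b -> in01 (resI T a b).
Proof.
move=> [tn lc] ha hb.
have T0 := @T0r R T a tn ha.
set S := [set x : R | in01 x /\ T a x <= b].
have hS : has_sup S.
  split; first by exists 0; split; [exact: in01_0|rewrite T0; case/andP: hb].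
  by exists 1 => x [/andP[_ ?] _].
have s0 : 0 <= sup S.
  apply: sup_upper_bound => //; split; [exact: in01_0|rewrite T0; by case/andP: hb].
have s1 : sup S <= 1 by apply: ge_sup; [case: hS|move=> x [/andP[_ ?] _]].
by rewrite /in01 /resI -/S s0 s1.
Qed.

Lemma eq_le01 (R : realType) (X Y : R) : in01 X -> in01 Y ->
  (forall c, in01 c -> (c <= X <-> c <= Y)) -> X = Y.
Proof.
move=> hX hY H; apply/le_anti/andP; split.
  by apply/(H X hX).
by apply/(H Y hY).
Qed.

Lemma Tpos (R : realType) (T : R -> R -> R) x y : tnorm T -> in01 x -> in01 y ->
  (T x y <= 0) <-> (T x y = 0).
Proof.
move=> [T01 _ _ _ _] hx hy; split; last by move=> ->.
by move=> H; apply/le_anti; rewrite H; case/andP: (T01 _ _ hx hy).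
Qed.

Lemma negT (R : realType) (T : R -> R -> R) x y : ltnorm T -> in01 x -> in01 y ->
  resI T x (resN T y) = resN T (T x y).
Proof.
move=> lt hx hy; have [tn lc] := lt; have [T01 TC TA TM T1] := tn.
have h0 := in01_0 R.
have hN := resI01 lt hy h0.
apply: eq_le01; [exact: resI01 lt hx hN|exact: resI01 lt (T01 _ _ hx hy) h0|] => c hc.
rewrite (resPb lt) // /resN (resPb lt) //; last exact: T01.
rewrite (resPb lt) //; last exact: T01.
by rewrite TA // (TC y x).
Qed.

Lemma contraI (R : realType) (T : R -> R -> R) a b : IMTL T -> in01 a -> in01 b ->
  resI T (resN T a) (resN T b) = resI T b a.
Proof.
move=> [lt inv] ha hb; have [tn lc] := lt; have [T01 TC TA TM T1] := tn.
have h0 := in01_0 R.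
have hNa := resI01 lt ha h0.
have hNb := resI01 lt hb h0.
apply: eq_le01; [exact: resI01 lt hNa hNb|exact: resI01 lt hb ha|] => c hc.
rewrite (resPb lt) // /resN (resPb lt) //; last exact: T01.
rewrite (resPb lt) //.
rewrite -{2}(inv a ha) /resN (resPb lt) //; last exact: T01.
by rewrite TA // (TC b) // -TA.
Qed.

Lemma Linc (R : realType) (L : R -> R -> R) a x y : vee_loss L ->
  a <= x -> x < y -> L a x < L a y.
Proof.
case=> L0 Laa Li Ld; rewrite le_eqVlt => /orP[/eqP <-|ax] xy.
  rewrite Laa; have m1 : a < (a + y) / 2 by rewrite midf_lt.
  have m2 : (a + y) / 2 < y by rewrite midf_lt.
  exact: le_lt_trans (L0 a _) (Li a _ _ m1 m2).2.
exact: (Li a x y ax xy).2.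
Qed.

Lemma Ldec (R : realType) (L : R -> R -> R) a x y : vee_loss L ->
  y < x -> x <= a -> L a x < L a y.
Proof.
case=> L0 Laa Li Ld yx; rewrite le_eqVlt => /orP[/eqP xa|xa].
  rewrite xa in yx *; rewrite Laa; have m1 : y < (y + a) / 2 by rewrite midf_lt.
  have m2 : (y + a) / 2 < a by rewrite midf_lt.
  exact: le_lt_trans (L0 a _) (Ld a _ _ m1 m2).2.
exact: (Ld a y x yx xa).2.
Qed.

Lemma sum_lt (R : realType) (U : finType) (f g : U -> R) u :
  (forall w, f w <= g w) -> f u < g u -> \sum_(w : U) f w < \sum_(w : U) g w.
Proof.
move=> H Hu; rewrite (bigD1 u) //= [X in _ < X](bigD1 u) //=.
by apply: ltr_leD => //; apply: ler_sum => w _.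
Qed.

Theorem proposition7 (R : realType) (U : finType) (T : R -> R -> R)
  (Rt : U -> U -> R) (A : {set U}) (L : R -> R -> R) (Ah : U -> R) :
  IMTL T -> T_preorder T Rt ->
  A != finset.set0 -> ~: A != finset.set0 ->
  vee_loss L ->
  optimal T Rt L A Ah ->
  (forall u, u \in A -> exists2 v, v \in ~: A &
     minus_adj_plus T Rt v (resN T (Ah v)) u (Ah u)) /\
  (forall u, u \in ~: A -> exists2 v, v \in A &
     plus_adj_minus T Rt v (Ah v) u (resN T (Ah u))).
Proof.
move=> imt pre nA ncA vl [fe opt].
have [lt inv] := imt; have [tn lc] := lt; have [T01 TC TA TM T1] := tn.
have [R01 Rr Rtr] := pre.
have [Ahf Ah01] := fe.
have [v0 v0A] := set0Pn _ ncA.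
have [a0 a0A] := set0Pn _ nA.
have TM1 : forall x y z, in01 x -> in01 y -> in01 z -> x <= y -> T x z <= T y z.
  by move=> x y z hx hy hz xy; rewrite (TC x) // (TC y) //; apply: TM.
have h1 := in01_1 R.
split.
- move=> u uA.
  pose G w v := resI T (Rt v w) (Ah v).
  pose am w := Order.arg_min v0 (fun v => v \in ~: A) (G w).
  pose B w := if w \in A then G w (am w) else Ah w.
  have amP : forall w, am w \in ~: A /\ forall v, v \in ~: A -> G w (am w) <= G w v.
    by move=> w; rewrite /am; case: arg_minP => // i Pi Hi; split.
  have G01 : forall w v : U, @in01 R (G w v) by move=> w v; exact: resI01 lt (R01 _ _) (Ah01 _).
  have B01 : forall w : U, @in01 R (B w) by move=> w; rewrite /B; case: ifP.
  have AhB : forall w, Ah w <= B w.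
    move=> w; rewrite /B; case: ifP => // _; rewrite /G (resPb lt) //; exact: Ahf.
  have key : forall v y, v \in ~: A -> T (Rt v y) (B y) <= Ah v.
    move=> v y vA; rewrite /B; case: ifP => yA; last exact: Ahf.
    have [_ H] := amP y.
    apply: le_trans (TM _ _ _ (R01 _ _) (G01 _ _) (G01 _ _) (H v vA)) _.
    by rewrite -(resPb lt (R01 v y) (Ah01 v) (G01 y v)).
  have Bf : feasible T Rt B.
    split => // x y; rewrite {2}/B; case: ifP => xA; last by apply: key; rewrite inE xA.
    have [amA _] := amP x.
    rewrite /G (resPb lt) //; last exact: T01.
    rewrite TA //; apply: le_trans (key _ y amA); apply: TM1 => //; solve [exact: T01 | exact: Rtr].
  exists (am u); first by case: (amP u).
  rewrite /minus_adj_plus contraI //.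
  have BuG : B u = resI T (Rt (am u) u) (Ah (am u)) by rewrite /B uA.
  apply/eqP; rewrite eq_le -BuG AhB /=.
  rewrite leNgt; apply/negP => Hlt.
  have := opt B Bf; apply/negP; rewrite -ltNge.
  apply: (sum_lt (u := u)).
    move=> w; rewrite /crisp; case: ifP => wA.
      have := AhB w; rewrite le_eqVlt => /orP[/eqP ->//|Hw].
      by apply/ltW/Ldec => //; case/andP: (B01 w).
    by rewrite /B wA.
  by rewrite /crisp uA; apply: Ldec => //; case/andP: (B01 u).
- move=> u; rewrite inE => /negbTE uA.
  pose H w v := T (Rt w v) (Ah v).
  pose amx w := Order.arg_max a0 (fun v => v \in A) (H w).
  pose B w := if w \in A then Ah w else H w (amx w).
  have amP : forall w, amx w \in A /\ forall v, v \in A -> H w v <= H w (amx w).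
    by move=> w; rewrite /amx; case: arg_maxP => // i Pi Hi; split.
  have H01 : forall w v : U, @in01 R (H w v) by move=> w v; exact: T01 (R01 _ _) (Ah01 _).
  have B01 : forall w : U, @in01 R (B w) by move=> w; rewrite /B; case: ifP.
  have BAh : forall w, B w <= Ah w.
    move=> w; rewrite /B; case: ifP => // _; exact: Ahf.
  have key : forall x v, v \in A -> T (Rt x v) (Ah v) <= B x.
    move=> x v vA; rewrite /B; case: ifP => xA; first exact: Ahf.
    by have [_ Hm] := amP x; exact: Hm v vA.
  have Bf : feasible T Rt B.
    split => // x y; rewrite {1}/B; case: ifP => yA; first exact: key.
    have [amA _] := amP y.
    rewrite /H TA //; apply: le_trans (key x _ amA); apply: TM1 => //; solve [exact: T01 | exact: Rtr].
  exists (amx u); first by case: (amP u).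
  rewrite /plus_adj_minus negT //.
  rewrite TC //; congr (resN T _).
  have BuH : B u = T (Rt u (amx u)) (Ah (amx u)) by rewrite /B uA.
  apply/eqP; rewrite eq_le -BuH BAh andbT.
  rewrite leNgt; apply/negP => Hlt.
  have := opt B Bf; apply/negP; rewrite -ltNge.
  apply: (sum_lt (u := u)).
    move=> w; rewrite /crisp; case: ifP => wA.
      by rewrite /B wA.
    have := BAh w; rewrite le_eqVlt => /orP[/eqP ->//|Hw].
    by apply/ltW/Linc => //; case/andP: (B01 w).
  by rewrite /crisp uA; apply: Linc => //; case/andP: (B01 u).
Qed.
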